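(* Let $r\ge1$, let $\delta$ be an integer, and for $x,y\in\mathbb R^r$ put $x\cap y=(\min(x_i,y_i))_{1\le i\le r}$. Let $\lambda,\mu\in\mathbb R^r$. (i) If $\lambda$ and $\mu$ are strictly decreasing and are conjugate under the action of $W(C_r)$, then $\lambda$ and $\lambda\cap\mu$ are conjugate under the action of $W(C_r)$. (ii) If $\lambda$ and $\mu$ are decreasing and are conjugate under the star action of $W(C_r)$, then $\lambda$ and $\lambda\cap\mu$ are conjugate under the star action of $W(C_r)$. (iii) Assertions (i) and (ii) also hold with $W(C_r)$ replaced by $W(D_r)$.
   Context: $W(C_r)$ is the group of signed permutations of the coordinates of $\mathbb R^r$ and $W(D_r)\subseteq W(C_r)$ the subgroup of signed permutations involving an even number of sign changes. $\hat\rho=(-\tfrac\delta2,-\tfrac\delta2-1,\dots,-\tfrac\delta2-(r-1))$ and the star action is $w\star x=w(x+\hat\rho)-\hat\rho$. ''Decreasing'' means $x_1\ge x_2\ge\cdots\ge x_r$; ''strictly decreasing'' means $x_1>\cdots>x_r$. *)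

(* Defs.v *)
(* Vectors in R^r are row vectors 'rV[R]_r; coordinates are
   indexed by 'I_r (0-based: coordinate i here is coordinate i+1 of the paper). *)
From HB Require Import structures.
From mathcomp Require Import all_boot all_order all_algebra all_fingroup.
Set Implicit Arguments. Unset Strict Implicit. Unset Printing Implicit Defensive.
Import Order.TTheory GRing.Theory Num.Theory.
Local Open Scope ring_scope.

Section Defs.
Variable R : realFieldType.
Variable r : nat.

(* The signed permutation (s, e): coordinate i of the image is
   (-1)^(e i) * x_(s i).  All such maps form W(C_r). *)
Definition sperm_act (s : 'S_r) (e : {ffun 'I_r -> bool}) (x : 'rV[R]_r) : 'rV[R]_r :=
  \row_i ((-1) ^+ e i * x 0 (s i)).

Inductive weyl_type := TypeC | TypeD.

Definition in_weyl (t : weyl_type) (s : 'S_r) (e : {ffun 'I_r -> bool}) : bool :=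
  match t with
  | TypeC => true
  | TypeD => ~~ odd #|[set i | e i]|
  end.

Definition rho_hat (delta : int) : 'rV[R]_r :=
  \row_(i < r) (- (delta%:~R / 2) - (i : nat)%:R).

Definition star_act (delta : int) s e (x : 'rV[R]_r) : 'rV[R]_r :=
  sperm_act s e (x + rho_hat delta) - rho_hat delta.

Definition weyl_conj (t : weyl_type) (x y : 'rV[R]_r) : Prop :=
  exists s e, in_weyl t s e /\ sperm_act s e x = y.

Definition weyl_star_conj (t : weyl_type) (delta : int) (x y : 'rV[R]_r) : Prop :=
  exists s e, in_weyl t s e /\ star_act delta s e x = y.

Definition vcap (x y : 'rV[R]_r) : 'rV[R]_r := \row_i Num.min (x 0 i) (y 0 i).

Definition decreasing (x : 'rV[R]_r) : Prop :=
  forall i j : 'I_r, (i <= j)%N -> x 0 j <= x 0 i.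

Definition strictly_decreasing (x : 'rV[R]_r) : Prop :=
  forall i j : 'I_r, (i < j)%N -> x 0 j < x 0 i.

End Defs.

(* Main.v *)
Require Import Defs.
From mathcomp Require Import all_boot all_order all_algebra all_fingroup.
From mathcomp Require Import zify lra.
Set Implicit Arguments. Unset Strict Implicit. Unset Printing Implicit Defensive.
Import Order.TTheory GRing.Theory Num.Theory.
Local Open Scope ring_scope.

Lemma cnt_tup (T : eqType) n (f : 'I_n -> T) (P : pred T) :
  count P [tuple f i | i < n] = #|[set i | P (f i)]|.
Proof. rewrite cardE /enum_mem size_filter /= count_map -enumT.
 by apply: eq_count => i /=; rewrite inE.
Qed.

Lemma sperm_abs (R : realFieldType) (r : nat) s e (x y : 'rV[R]_r) :
  sperm_act s e x = y -> forall i, `|y 0 i| = `|x 0 (s i)|.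
Proof. by move=> <- i; rewrite mxE normrM normr_sign mul1r. Qed.

Lemma card_abs_perm (R : realFieldType) (r : nat) (s : 'S_r) (x y : 'rV[R]_r)
  (h : forall i, `|y 0 i| = `|x 0 (s i)|) (P : pred R) :
  #|[set i | P `|y 0 i|]| = #|[set i | P `|x 0 i|]|.
Proof.
rewrite -(card_preimset [set i | P `|x 0 i|] (@perm_inj _ s)); congr #|pred_of_set _|.
by apply/setP => i; rewrite !inE h.
Qed.

Lemma chain (r : nat) (le : rel 'I_r) (tot : forall i j, le i j || le j i)
  (f g : 'I_r -> bool) (hf : forall i j, le i j -> f j -> f i)
  (hg : forall i j, le i j -> g j -> g i) :
  [set i | f i] \subset [set i | g i] \/ [set i | g i] \subset [set i | f i].
Proof.
case: (boolP ([set i | f i] \subset [set i | g i])) => [H|/subsetPn [i]]; first by left.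
rewrite !inE => fi ngi; right; apply/subsetP => j; rewrite !inE => gj.
case/orP: (tot i j) => lij; last exact: hf _ _ lij fi.
by rewrite (hg _ _ lij gj) in ngi.
Qed.

Lemma card_key (r : nat) (A B C D : {set 'I_r}) :
  (A \subset B \/ B \subset A) -> (C \subset D \/ D \subset C) ->
  (#|A| + #|C| = #|B| + #|D|)%N -> (#|A :&: B| + #|C :|: D| = #|A| + #|C|)%N.
Proof.
move=> [AB|BA] [CD|DC] E.
- rewrite (setIidPl AB) (setUidPr CD).
  have := subset_leq_card AB; have := subset_leq_card CD; lia.
- by rewrite (setIidPl AB) (setUidPl DC).
- by rewrite (setIidPr BA) (setUidPr CD) E.
- rewrite (setIidPr BA) (setUidPl DC).
  have := subset_leq_card BA; have := subset_leq_card DC; lia.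
Qed.

Lemma minU (R : realFieldType) (U : pred R) (hU : forall a b, a <= b -> U a -> U b) a b :
  U (Num.min a b) = U a && U b.
Proof.
case: (lerP a b) => h; apply/idP/andP.
- by move=> Ua; split=> //; apply: hU Ua.
- by case.
- by move=> Ub; split=> //; apply: hU Ub; apply: ltW.
- by case.
Qed.

Lemma minL (R : realFieldType) (L : pred R) (hL : forall a b, a <= b -> L b -> L a) a b :
  L (Num.min a b) = L a || L b.
Proof.
case: (lerP a b) => h; apply/idP/orP.
- by left.
- by case=> // Lb; apply: hL Lb.
- by right.
- by case=> // La; apply: hL La; apply: ltW.
Qed.

Lemma key_count (R : realFieldType) (r : nat) (x y : 'rV[R]_r) (U L : pred R)
  (hU : forall a b, a <= b -> U a -> U b) (hL : forall a b, a <= b -> L b -> L a) :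
  decreasing x -> decreasing y ->
  (#|[set i | U (x 0%R i)]| + #|[set i | L (x 0%R i)]| =
   #|[set i | U (y 0%R i)]| + #|[set i | L (y 0%R i)]|)%N ->
  (#|[set i | U (vcap x y 0%R i)]| + #|[set i | L (vcap x y 0%R i)]| =
   #|[set i | U (x 0%R i)]| + #|[set i | L (x 0%R i)]|)%N.
Proof.
move=> dx dy E.
have -> : [set i | U (vcap x y 0%R i)] = [set i | U (x 0%R i)] :&: [set i | U (y 0%R i)].
  by apply/setP => i; rewrite !inE mxE minU.
have -> : [set i | L (vcap x y 0%R i)] = [set i | L (x 0%R i)] :|: [set i | L (y 0%R i)].
  by apply/setP => i; rewrite !inE mxE minL.
apply: card_key E.
- apply: (@chain r (fun i j => (i <= j)%N)) => [i j|i j lij|i j lij]; first exact: leq_total.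
  + by apply: hU; apply: dx.
  + by apply: hU; apply: dy.
- apply: (@chain r (fun i j => (j <= i)%N)) => [i j|i j lij|i j lij]; first exact: leq_total.
  + by apply: hL; apply: dx.
  + by apply: hL; apply: dy.
Qed.

Lemma split_card (R : realFieldType) (r : nat) (f : 'I_r -> R) (P U L : pred R)
  (hP : forall z, P z = U z || L z) (hd : forall z, U z -> L z -> False) :
  #|[set i | P (f i)]| = (#|[set i | U (f i)]| + #|[set i | L (f i)]|)%N.
Proof.
have -> : [set i | P (f i)] = [set i | U (f i)] :|: [set i | L (f i)].
  by apply/setP => i; rewrite !inE hP.
rewrite cardsU.
have -> : [set i | U (f i)] :&: [set i | L (f i)] = set0.
  apply/setP => i; rewrite !inE; apply/negbTE/negP => /andP[]; exact: hd.
by rewrite cards0 subn0.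
Qed.

Lemma ge_cnt (R : realFieldType) (r : nat) (x y : 'rV[R]_r) :
  decreasing x -> decreasing y ->
  (forall P : pred R, #|[set i | P `|y 0%R i|]| = #|[set i | P `|x 0%R i|]|) ->
  forall a, #|[set i | a <= `|vcap x y 0%R i|]| = #|[set i | a <= `|x 0%R i|]|.
Proof.
move=> dx dy H a.
case: (ltrP 0 a) => a0.
- have hP : forall z : R, a <= `|z| = (a <= z) || (z <= - a).
    by move=> z; rewrite ler_normr lerNr.
  have hd : forall z : R, a <= z -> z <= - a -> False by move=> z; lra.
  rewrite !(split_card _ hP hd).
  apply: (@key_count R r x y (fun z => a <= z) (fun z => z <= - a)) => //; first by move=> u v uv au; apply: le_trans uv.
  - by move=> u v uv au; apply: le_trans au.
  - by rewrite -!(split_card _ hP hd) H.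
- have hT : forall z : 'rV[R]_r, [set i | a <= `|z 0%R i|] = setT.
    by move=> z; apply/setP => i; rewrite !inE (le_trans a0).
  by rewrite !hT.
Qed.

Lemma gt_cnt (R : realFieldType) (r : nat) (x y : 'rV[R]_r) :
  decreasing x -> decreasing y ->
  (forall P : pred R, #|[set i | P `|y 0%R i|]| = #|[set i | P `|x 0%R i|]|) ->
  forall a, #|[set i | a < `|vcap x y 0%R i|]| = #|[set i | a < `|x 0%R i|]|.
Proof.
move=> dx dy H a.
case: (lerP 0 a) => a0.
- have hP : forall z : R, a < `|z| = (a < z) || (z < - a).
    by move=> z; rewrite ltr_normr ltrNr.
  have hd : forall z : R, a < z -> z < - a -> False by move=> z; lra.
  rewrite !(split_card _ hP hd).
  apply: (@key_count R r x y (fun z => a < z) (fun z => z < - a)) => //; first by move=> u v uv au; apply: lt_le_trans uv.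
  - by move=> u v uv au; apply: le_lt_trans au.
  - by rewrite -!(split_card _ hP hd) H.
- have hT : forall z : 'rV[R]_r, [set i | a < `|z 0%R i|] = setT.
    by move=> z; apply/setP => i; rewrite !inE (lt_le_trans a0).
  by rewrite !hT.
Qed.

Lemma perm_abs (R : realFieldType) (r : nat) (x y : 'rV[R]_r) :
  decreasing x -> decreasing y ->
  (forall P : pred R, #|[set i | P `|y 0%R i|]| = #|[set i | P `|x 0%R i|]|) ->
  perm_eq [tuple `|vcap x y 0%R i| | i < r] [tuple `|x 0%R i| | i < r].
Proof.
move=> dx dy H; apply/allP => a _ /=; rewrite !cnt_tup; apply/eqP.
have hP : forall z : R, a <= z = (a == z) || (a < z) by move=> z; rewrite le_eqVlt.
have hd : forall z : R, a == z -> a < z -> False by move=> z /eqP ->; rewrite ltxx.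
have E1 := split_card (fun i => `|vcap x y 0%R i|) hP hd.
have E2 := split_card (fun i => `|x 0%R i|) hP hd.
rewrite /= ge_cnt // in E1; rewrite gt_cnt // in E1.
have -> : [set i | `|vcap x y 0%R i| == a] = [set i | a == `|vcap x y 0%R i|].
  by apply/setP => i; rewrite !inE eq_sym.
have -> : [set i | `|x 0%R i| == a] = [set i | a == `|x 0%R i|].
  by apply/setP => i; rewrite !inE eq_sym.
move: E1 E2 => /= ->; lia.
Qed.

Lemma build_abs (R : realFieldType) (r : nat) (x y : 'rV[R]_r) :
  perm_eq [tuple `|y 0%R i| | i < r] [tuple `|x 0%R i| | i < r] ->
  exists s : 'S_r, forall i, `|y 0%R i| = `|x 0%R (s i)|.
Proof.
case/tuple_permP => p E; exists p => i.
have E' : [tuple `|y 0%R i| | i < r] = [tuple tnth [tuple `|x 0%R i| | i < r] (p i) | i < r]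
  := val_inj E.
by have := congr1 (fun t => tnth t i) E'; rewrite !tnth_mktuple.
Qed.

Lemma build_C (R : realFieldType) (r : nat) (x y : 'rV[R]_r) (s : 'S_r)
  (h : forall i, `|y 0%R i| = `|x 0%R (s i)|) :
  sperm_act s [ffun i => y 0%R i != x 0%R (s i)] x = y.
Proof.
apply/rowP => i; rewrite mxE ffunE.
case: eqP => [->|ne]; first by rewrite expr0 mul1r.
move/eqP: (h i); rewrite eqr_norm2; case/orP => /eqP E; first by [].
by rewrite E expr1 mulN1r.
Qed.

Lemma sum_card (r : nat) (e : 'I_r -> bool) :
  (\sum_i (e i : nat))%N = #|[set i | e i]|.
Proof.
rewrite -sum1_card [RHS]big_mkcond; apply: eq_bigr => i _; rewrite inE; by case: (e i).
Qed.

Lemma prod_sperm (R : realFieldType) (r : nat) (s : 'S_r) e (x : 'rV[R]_r) :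
  \prod_i sperm_act s e x 0%R i = (-1) ^+ #|[set i | e i]| * \prod_i x 0%R i.
Proof.
under eq_bigr => i _ do rewrite mxE.
rewrite big_split /= prodrXr sum_card; congr (_ * _).
by symmetry; apply: (reindex_inj (@perm_inj _ s)).
Qed.

Lemma prod_sign (R : realFieldType) (r : nat) (F : 'I_r -> R) :
  \prod_i F i = (-1) ^+ #|[set i | F i < 0]| * \prod_i `|F i|.
Proof.
under eq_bigr => i _ do rewrite [F i]numEsign.
by rewrite big_split /= prodrXr sum_card.
Qed.

Lemma build_D (R : realFieldType) (r : nat) (x y : 'rV[R]_r) (s : 'S_r)
  (h : forall i, `|y 0%R i| = `|x 0%R (s i)|)
  (hp : \prod_i y 0%R i = \prod_i x 0%R i) :
  exists (s : 'S_r) (e : {ffun 'I_r -> bool}), ~~ odd #|[set i | e i]| /\ sperm_act s e x = y.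
Proof.
set e := [ffun i => y 0%R i != x 0%R (s i)].
have he : sperm_act s e x = y := build_C h.
case: (boolP (odd #|[set i | e i]|)) => od; last by exists s, e.
case: (boolP (\prod_i x 0%R i == 0)) => [/prodf_eq0 [j _ /eqP xj]|nz].
- pose i := (s^-1)%g j.
  have sij : s i = j by rewrite /i permKV.
  pose e' := [ffun k => if k == i then ~~ e k else e k].
  exists s, e'; split.
  + case: (boolP (e i)) => ei.
    * have -> : [set k | e' k] = [set k | e k] :\ i.
        apply/setP => k; rewrite !inE ffunE.
        by case: (k =P i) => [->|_] /=; rewrite ?ei ?eqxx.
      by move: od; rewrite (cardsD1 i) inE ei add1n /=.
    * have -> : [set k | e' k] = i |: [set k | e k].
        apply/setP => k; rewrite !inE ffunE.
        by case: (k =P i) => [->|_] /=; rewrite ?ei ?eqxx.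
      by rewrite cardsU1 inE ei add1n /= od.
  + rewrite -he; apply/rowP => k; rewrite !mxE !ffunE.
    by case: eqP => [->|] //; rewrite sij xj !mulr0.
- exfalso; have := prod_sperm s e x.
  rewrite he hp -signr_odd od expr1 mulN1r => E.
  have E0 : \prod_i x 0%R i = 0 by lra.
  by rewrite E0 eqxx in nz.
Qed.

Lemma abs_prod (R : realFieldType) (r : nat) (x y : 'rV[R]_r) (s : 'S_r)
  (h : forall i, `|y 0%R i| = `|x 0%R (s i)|) :
  \prod_i `|y 0%R i| = \prod_i `|x 0%R i|.
Proof.
under eq_bigr => i _ do rewrite h.
by symmetry; apply: (reindex_inj (@perm_inj _ s)).
Qed.

Lemma core (R : realFieldType) (r : nat) (t : weyl_type) (x y : 'rV[R]_r) :
  decreasing x -> decreasing y -> weyl_conj t x y -> weyl_conj t x (vcap x y).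
Proof.
move=> dx dy [s [e [ht he]]].
have hy := sperm_abs he.
have H := card_abs_perm hy.
have [s' hs'] := build_abs (perm_abs dx dy H).
case: t ht => ht.
  by exists s', [ffun i => vcap x y 0%R i != x 0%R (s' i)]; split => //; apply: build_C.
have hpy : \prod_i y 0%R i = \prod_i x 0%R i.
  by rewrite -he prod_sperm -signr_odd (negbTE ht) expr0 mul1r.
have hp : \prod_i vcap x y 0%R i = \prod_i x 0%R i.
  rewrite (prod_sign (fun i => vcap x y 0%R i)) (abs_prod hs').
  have hN : [set i | vcap x y 0%R i < 0] = [set i | x 0%R i < 0] :|: [set i | y 0%R i < 0].
    apply/setP => i; rewrite !inE mxE.
    by rewrite (@minL R (fun z => z < 0)) // => a b ab b0; apply: le_lt_trans b0.
  have [XY|YX] := @chain r (fun i j => (j <= i)%N) (fun i j => leq_total j i)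
     (fun i => x 0%R i < 0) (fun i => y 0%R i < 0)
     (fun i j ij h => le_lt_trans (dx _ _ ij) h) (fun i j ij h => le_lt_trans (dy _ _ ij) h).
  - rewrite hN (setUidPr XY) -(abs_prod hy) -(prod_sign (fun i => y 0%R i)) hpy //.
  - by rewrite hN (setUidPl YX) -(prod_sign (fun i => x 0%R i)).
have [s2 [e2 [he2 he2']]] := build_D hs' hp.
by exists s2, e2.
Qed.

Lemma star_iff (R : realFieldType) (r : nat) t d (x y : 'rV[R]_r) :
  weyl_star_conj t d x y <-> weyl_conj t (x + rho_hat R r d) (y + rho_hat R r d).
Proof.
split => [[s [e [h1 h2]]]|[s [e [h1 h2]]]]; exists s, e; split => //.
- by rewrite -h2 /star_act subrK.
- by rewrite /star_act h2 addrK.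
Qed.

Lemma vcap_shift (R : realFieldType) (r : nat) (x y z : 'rV[R]_r) :
  vcap x y + z = vcap (x + z) (y + z).
Proof.
apply/rowP => i; rewrite !mxE.
by case: (lerP (x 0%R i) (y 0%R i)) => h; case: (lerP (x 0%R i + z 0%R i) (y 0%R i + z 0%R i)) => h'; lra.
Qed.

Lemma dec_shift (R : realFieldType) (r : nat) d (x : 'rV[R]_r) :
  decreasing x -> decreasing (x + rho_hat R r d).
Proof.
move=> h i j ij; rewrite !mxE.
have := h i j ij; have : (i : nat)%:R <= (j : nat)%:R :> R by rewrite ler_nat.
lra.
Qed.

Lemma strict_dec (R : realFieldType) (r : nat) (x : 'rV[R]_r) :
  strictly_decreasing x -> decreasing x.
Proof.
move=> h i j; rewrite leq_eqVlt; case/orP => [/eqP/val_inj ->//|/h/ltW] //.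
Qed.

Theorem proposition3p2 (R : realFieldType) (r : nat) (delta : int)
    (lambda mu : 'rV[R]_r) :
  (1 <= r)%N ->
  forall t : weyl_type,
    (strictly_decreasing lambda -> strictly_decreasing mu ->
       weyl_conj t lambda mu -> weyl_conj t lambda (vcap lambda mu)) /\
    (decreasing lambda -> decreasing mu ->
       weyl_star_conj t delta lambda mu ->
       weyl_star_conj t delta lambda (vcap lambda mu)).
Proof.
move=> _ t; split.
- by move=> sl sm; apply: core; apply: strict_dec.
- move=> dl dm /star_iff c; apply/star_iff; rewrite vcap_shift.
  by apply: core => //; apply: dec_shift.
Qed.
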